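(* Let $F$ be a Ferrers diagram and let $(x,y)\in\mathbb{N}^2$ with $x>1$, $y>1$ and $(x,y)\notin F$. Then the divisor $D_{x,y}$ on $R(F)$ has positive rank.
   Context: $\mathbb{N}=\{1,2,3,\dots\}$. A Ferrers diagram is a finite subset $F\subset\mathbb{N}^2$ such that whenever $(x,y)\in F$, either $x=1$ or $(x-1,y)\in F$, and either $y=1$ or $(x,y-1)\in F$; $x$ is the column index and $y$ the row index. The Ferrers rook graph $R(F)$ is the simple graph with vertex set $F$ in which distinct $(x,y),(x',y')$ are adjacent iff $x=x'$ or $y=y'$. For $(x,y)\in\mathbb{N}^2$, $D_{x,y}=\sum_{(x',y')\in F,\ x'\neq x,\ y'\neq y}(x',y')$, i.e. one chip on each vertex of $F$ not in column $x$ and not in row $y$. Divisors on a graph: functions $D:V\to\mathbb{Z}$; firing a vertex $v$ means $v$ loses $\deg(v)$ chips and each neighbor gains one; divisors are equivalent if related by a sequence of firings; $\vert D\vert$ is the set of effective (nonnegative) divisors equivalent to $D$; $D$ has positive rank if for every vertex $v$ some $D'\in\vert D\vert$ has $D'(v)>0$. *)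

(* Defs.v *)
From HB Require Import structures.
From mathcomp Require Import all_boot all_order all_algebra.
From mathcomp Require Import finmap.
From Stdlib Require Import Relations.
Set Implicit Arguments. Unset Strict Implicit. Unset Printing Implicit Defensive.
Import Order.TTheory GRing.Theory Num.Theory.
Local Open Scope ring_scope.

Section ChipFiring.
Variables (V : finType) (adj : rel V).

Definition divisor := {ffun V -> int}.

Definition deg (v : V) : nat := #|[set w | adj v w]|.

Definition fire (v : V) (D : divisor) : divisor :=
  [ffun w => if w == v then D w - (deg v)%:Z
             else if adj v w then D w + 1 else D w].

Definition fire_step (D D' : divisor) : Prop := exists v, D' = fire v D.

Definition div_equiv (D D' : divisor) : Prop :=
  clos_refl_sym_trans divisor fire_step D D'.

Definition effective (D : divisor) : Prop := forall v, (0 <= D v)%R.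

Definition positive_rank (D : divisor) : Prop :=
  forall v : V, exists D' : divisor,
    div_equiv D D' /\ effective D' /\ (0 < D' v)%R.

End ChipFiring.

Local Open Scope fset_scope.

(* N = {1,2,...}; x is the column index (first coordinate), y the row index *)
Definition ferrers (F : {fset nat * nat}) : Prop :=
  forall p, p \in F ->
    [/\ 1 <= p.1, 1 <= p.2,
        p.1 = 1 \/ (p.1.-1, p.2) \in F
      & p.2 = 1 \/ (p.1, p.2.-1) \in F]%N.

Definition rook_adj (F : {fset nat * nat}) : rel F :=
  fun u v => (u != v) && (((val u).1 == (val v).1) || ((val u).2 == (val v).2)).

Definition Dxy (F : {fset nat * nat}) (x y : nat) : divisor F :=
  [ffun v : F => if ((val v).1 != x) && ((val v).2 != y) then 1%:Z else 0%:Z].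

(* Main.v *)
Require Import Defs.
From mathcomp Require Import all_boot all_order all_algebra zify finmap.
From Stdlib Require Import Relations.
Import GRing.Theory Num.Theory.
Local Open Scope ring_scope.

Lemma count_le1 (T : eqType) (P : pred T) (e : seq T) : uniq e ->
  (forall u u', P u -> P u' -> u = u') -> (count P e <= 1)%N.
Proof.
elim: e => //= x e IH /andP[xe ue] H.
case Px: (P x) => /=; last exact: IH.
have: ~~ has P e.
  apply/hasPn => u ue'; apply/negP => Pu.
  by move: xe; rewrite (H _ _ Px Pu) ue'.
by rewrite has_count; case: (count P e).
Qed.

Lemma count_split (T : eqType) (A B : pred T) (e : seq T) :
  count A e = (count (predI A B) e + count (predI A (predC B)) e)%N.
Proof. elim: e => //= x e ->; case: (A x); case: (B x) => /=; lia. Qed.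

Lemma degE (V : finType) (adj : rel V) w : deg adj w = count (adj w) (enum V).
Proof. rewrite /deg cardsE cardE -size_filter /enum_mem -filter_predI. congr size. apply: eq_filter => u. by rewrite /= andbT. Qed.
Section Fire.
Variables (V : finType) (adj : rel V).
Hypothesis irr : irreflexive adj.
Lemma fireL_val s (D : divisor V) w : (foldr (@fire V adj) D s) w =
  D w - (count_mem w s * deg adj w)%N%:Z + (count (adj^~ w) s)%:Z.
Proof.
elim: s => [|v s IH] /=; first by rewrite mul0n subr0 addr0.
rewrite ffunE IH; case: eqP => [->|/eqP nwv].
  rewrite eqxx irr /=. lia.
rewrite eq_sym (negbTE nwv) /=; case: (adj v w) => /=; lia.
Qed.
Lemma fireL_equiv s (D : divisor V) : div_equiv adj D (foldr (@fire V adj) D s).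
Proof.
elim: s => [|v s IH] /=; first exact: rst_refl.
apply: rst_trans IH _; apply: rst_step; by exists v.
Qed.
End Fire.

Section Key.
Variables (V : finType) (adj : rel V) (D : divisor V) (p q : V -> nat) (a b : nat).
Hypothesis adjE : forall u v, adj u v = (u != v) && ((p u == p v) || (q u == q v)).
Hypothesis DE : forall w, D w = if (p w != a) && (q w != b) then 1 else 0.
Hypothesis hb : forall w, p w = a -> q w != b.
Hypothesis hex : forall w, p w = a -> exists u, p u != a /\ q u = q w.
Hypothesis inj : forall u u', p u = p u' -> q u = q u' -> u = u'.

Lemma key v : p v = a -> exists D', div_equiv adj D D' /\ effective D' /\ 0 < D' v.
Proof.
move=> pv.
have irr : irreflexive adj by move=> u; rewrite adjE eqxx.
have sym : forall u w, adj u w = adj w u.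
  by move=> u w; rewrite !adjE eq_sym [p w == _]eq_sym [q w == _]eq_sym.
set S := [pred u | p u != a].
set s := [seq u <- enum V | S u].
exists (foldr (@fire V adj) D s); split; first exact: fireL_equiv.
have val : forall w, (foldr (@fire V adj) D s) w = D w - ((S w) * deg adj w)%N%:Z
   + (count (predI (adj^~ w) S) (enum V))%:Z.
  move=> w; rewrite fireL_val // count_uniq_mem; last by apply: filter_uniq; apply: enum_uniq.
  by rewrite mem_filter mem_enum andbT count_filter.
have degw : forall w, deg adj w = (count (predI (adj^~ w) S) (enum V) +
                          count (predI (adj^~ w) (predC S)) (enum V))%N.
  move=> w; rewrite degE -count_split; apply: eq_count => u; exact: sym.
have c2 : forall w, S w -> (count (predI (adj^~ w) (predC S)) (enum V) <= 1)%N /\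
   ((0 < count (predI (adj^~ w) (predC S)) (enum V))%N -> D w = 1).
  move=> w Sw; split.
    apply: count_le1; first exact: enum_uniq.
    move=> u u' /= /andP[]; rewrite adjE => /andP[_ H1] H2 /andP[]; rewrite adjE => /andP[_ H3] H4.
    move: H2 H4 Sw; rewrite /S /= !negbK => /eqP H2 /eqP H4 Sw.
    have Sw' : (a == p w) = false by rewrite eq_sym; exact: negbTE.
    move: H1 H3; rewrite H2 H4 Sw' /= => /eqP H1 /eqP H3.
    by apply: inj; rewrite ?H2 ?H4 ?H1 ?H3.
  rewrite -has_count => /hasP [u _] /= /andP[]; rewrite adjE => /andP[_ H1].
  rewrite /S /= negbK => /eqP H2; move: H1; rewrite H2 eq_sym (negbTE Sw) /= => /eqP H1.
  rewrite DE; move: Sw; rewrite /S /= => ->; have := hb u H2; by rewrite H1 => ->.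
split.
  move=> w; rewrite val degw; case Sw: (S w) => /=.
    have [h1 h2] := c2 w Sw.
    move: h1 h2; case: (count (predI (adj^~ w) (predC S)) (enum V)) => [|[|n]] //= _.
      by move=> _; rewrite DE; case: ifP => _; lia.
    by move=> /(_ isT) ->; lia.
  rewrite DE; case: ifP => _; lia.
rewrite val.
have Sv : S v = false by rewrite /S /= pv eqxx.
rewrite /S /= pv eqxx mul0n subr0 DE pv eqxx /= add0r ltz_nat -has_count.
have [u [pu qu]] := hex v pv.
apply/hasP; exists u; first exact: mem_enum.
rewrite /= adjE qu eqxx orbT andbT pu andbT.
by apply/eqP => uv; move: pu; rewrite uv pv eqxx.
Qed.
End Key.
Local Close Scope ring_scope.

Lemma fer_left (F : {fset nat * nat}) : ferrers F ->
  forall d a b, (1 <= a)%N -> (a + d, b) \in F -> (a, b) \in F.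
Proof.
move=> HF; elim=> [|d IH] a b ha; first by rewrite addn0.
move=> H; apply: IH => //; have [_ _ [h|h] _] := HF _ H; rewrite /= in h.
  lia.
by move: h; rewrite addnS.
Qed.

Lemma fer_down (F : {fset nat * nat}) : ferrers F ->
  forall d a b, (1 <= b)%N -> (a, b + d) \in F -> (a, b) \in F.
Proof.
move=> HF; elim=> [|d IH] a b hb; first by rewrite addn0.
move=> H; apply: IH => //; have [_ _ _ [h|h]] := HF _ H; rewrite /= in h.
  lia.
by move: h; rewrite addnS.
Qed.

Theorem proposition3p1 (F : {fset nat * nat}) (x y : nat) :
  ferrers F -> (1 < x)%N -> (1 < y)%N -> (x, y) \notin F ->
  positive_rank (@rook_adj F) (Dxy F x y).
Proof.
move=> HF hx hy hxy v.
have inj : forall u u' : F, (val u).1 = (val u').1 -> (val u).2 = (val u').2 -> u = u'.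
  move=> u u' h1 h2; apply: val_inj; case: (val u) h1 h2 => a b; case: (val u') => c d /= -> -> //.
have inF : forall u : F, val u \in F := fun u => valP u.
case: (boolP ((val v).1 == x)) => [/eqP h1|h1].
  have adjE : forall u w : F, rook_adj u w = (u != w) && (((val u).1 == (val w).1) || ((val u).2 == (val w).2)) by [].
  have DE : forall w : F, Dxy F x y w = if ((val w).1 != x) && ((val w).2 != y) then Posz 1 else Posz 0.
    by move=> w; rewrite ffunE.
  have hb : forall w : F, (val w).1 = x -> (val w).2 != y.
    move=> w hw; apply/negP => /eqP hw2; apply/negP: hxy; apply/negPn.
    by move: (inF w); rewrite -hw -hw2; case: (val w).
  have hex : forall w : F, (val w).1 = x -> exists u : F, (val u).1 != x /\ (val u).2 = (val w).2.
    move=> w hw.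
    have H : (1, (val w).2) \in F.
      apply: (@fer_left F HF (x - 1) 1 (val w).2) => //.
      rewrite add1n subn1 prednK; last lia.
      by move: (inF w); rewrite -hw; case: (val w).
    exists (Sub (1, (val w).2) H : F); rewrite SubK /=; split => //; lia.
  exact: (@key _ (@rook_adj F) (Dxy F x y) (fun u => (val u).1) (fun u => (val u).2) x y adjE DE hb hex inj v h1).
case: (boolP ((val v).2 == y)) => [/eqP h2|h2].
  have adjE : forall u w : F, rook_adj u w = (u != w) && (((val u).2 == (val w).2) || ((val u).1 == (val w).1)).
    by move=> u w; rewrite /rook_adj orbC.
  have DE : forall w : F, Dxy F x y w = if ((val w).2 != y) && ((val w).1 != x) then Posz 1 else Posz 0.
    by move=> w; rewrite ffunE andbC.
  have hb : forall w : F, (val w).2 = y -> (val w).1 != x.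
    move=> w hw; apply/negP => /eqP hw2; apply/negP: hxy; apply/negPn.
    by move: (inF w); rewrite -hw -hw2; case: (val w).
  have hex : forall w : F, (val w).2 = y -> exists u : F, (val u).2 != y /\ (val u).1 = (val w).1.
    move=> w hw.
    have H : ((val w).1, 1) \in F.
      apply: (@fer_down F HF (y - 1) (val w).1 1) => //.
      rewrite add1n subn1 prednK; last lia.
      by move: (inF w); rewrite -hw; case: (val w).
    exists (Sub ((val w).1, 1) H : F); rewrite SubK /=; split => //; lia.
  have inj' : forall u u' : F, (val u).2 = (val u').2 -> (val u).1 = (val u').1 -> u = u'.
    by move=> u u' a b; apply: inj.
  exact: (@key _ (@rook_adj F) (Dxy F x y) (fun u => (val u).2) (fun u => (val u).1) y x adjE DE hb hex inj' v h2).
exists (Dxy F x y); split; first exact: rst_refl.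
split; first by move=> w; rewrite ffunE; case: ifP.
by rewrite ffunE h1 h2.
Qed.
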